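(* Let $X_0,X_1,\ldots$ be a stationary mean-zero Gaussian sequence with covariance $\Gamma(k)=\mathrm{E}[X_0X_k]$, $\Gamma(0)=1$, having a spectral density $f$ (so $\Gamma(k)=\int_{-\pi}^{\pi}e^{-ik\phi}f(\phi)\,d\phi$) which is continuous and strictly positive on $[-\pi,\pi]$. Let $K=K_n$ be real numbers with $K=o\!\left(\sqrt{n/\log\log n}\right)$. With $$A(x)=\sum_{k=0}^{n}\sum_{j=0}^{n}\Gamma(k-j)x^{k+j},\quad B(x)=\sum_{k=0}^{n}\sum_{j=0}^{n}\Gamma(k-j)\,k\,x^{k+j-1},\quad C(x)=\sum_{k=0}^{n}\sum_{j=0}^{n}\Gamma(k-j)\,kj\,x^{k+j-2},$$ and $$F_2(x)=\frac{1}{\pi}\,\frac{\sqrt{2}\,|B(x)K|}{A(x)^{3/2}}\exp\!\left(-\frac{K^2}{2A(x)}\right)\mathrm{erf}\!\left(\frac{|B(x)K|}{\sqrt{2A(x)\left(A(x)C(x)-B(x)^2\right)}}\right),$$ we have, as $n\to\infty$, $$\int_{-1}^{1}F_2(x)\,dx=o(\log\log n).$$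
   Context: $A,B,C$ are $\mathrm{E}[P_n(x)^2]$, $\mathrm{E}[P_n(x)P_n'(x)]$, $\mathrm{E}[P_n'(x)^2]$ for $P_n(x)=\sum_{k=0}^nX_kx^k$. $\mathrm{erf}(u)=\frac{2}{\sqrt{\pi}}\int_0^u e^{-t^2}dt$. *)

(* Defs.v *)
From Stdlib Require Import Reals ZArith.
From Coquelicot Require Import Coquelicot.
Open Scope R_scope.

Definition erf (u : R) : R :=
  2 / sqrt PI * RInt (fun t => exp (- t ^ 2)) 0 u.

Definition Apoly (Gam : Z -> R) (n : nat) (x : R) : R :=
  sum_f_R0 (fun k => sum_f_R0 (fun j =>
    Gam (Z.of_nat k - Z.of_nat j)%Z * x ^ (k + j)) n) n.

(* B(x) = sum sum Gamma(k-j) k x^(k+j-1)  (the k = 0 terms vanish, so the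
   truncated nat exponent is harmless) *)
Definition Bpoly (Gam : Z -> R) (n : nat) (x : R) : R :=
  sum_f_R0 (fun k => sum_f_R0 (fun j =>
    Gam (Z.of_nat k - Z.of_nat j)%Z * INR k * x ^ (k + j - 1)) n) n.

(* C(x) = sum sum Gamma(k-j) k j x^(k+j-2)  (terms with k = 0 or j = 0 vanish) *)
Definition Cpoly (Gam : Z -> R) (n : nat) (x : R) : R :=
  sum_f_R0 (fun k => sum_f_R0 (fun j =>
    Gam (Z.of_nat k - Z.of_nat j)%Z * (INR k * INR j) * x ^ (k + j - 2)) n) n.

Definition F2 (Gam : Z -> R) (K : R) (n : nat) (x : R) : R :=
  let A := Apoly Gam n x in
  let B := Bpoly Gam n x in
  let C := Cpoly Gam n x in
  / PI * (sqrt 2 * Rabs (B * K) / Rpower A (3 / 2))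
       * exp (- (K ^ 2) / (2 * A))
       * erf (Rabs (B * K) / sqrt (2 * A * (A * C - B ^ 2))).

(* Main.v *)
Require Import Defs.
From Stdlib Require Import Reals ZArith Lra Lia.
From Coquelicot Require Import Coquelicot.
Open Scope R_scope.

Ltac req := match goal with |- @eq _ ?a ?b => change (@eq R a b) end.

Lemma cR_mult (f g : R -> R) (x:R) : continuous f x -> continuous g x -> continuous (fun y => f y * g y) x.
Proof. intros; apply (continuous_mult f g); auto. Qed.
Lemma cR_plus (f g : R -> R) (x:R) : continuous f x -> continuous g x -> continuous (fun y => f y + g y) x.
Proof. intros; apply (continuous_plus f g); auto. Qed.
Lemma cR_const (c x : R) : continuous (fun _ => c) x.
Proof. apply continuous_const. Qed.
Lemma cR_id (x:R) : continuous (fun y : R => y) x.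
Proof. apply continuous_id. Qed.
Lemma cR_opp (f : R -> R) (x:R) : continuous f x -> continuous (fun y => - f y) x.
Proof. intros; apply (continuous_opp f); auto. Qed.
Lemma cR_comp (f g : R -> R) (x:R) : continuous f x -> continuous g (f x) -> continuous (fun y => g (f y)) x.
Proof. intros; apply (continuous_comp f g); auto. Qed.
Lemma cR_inv (f : R -> R) (x:R) : continuous f x -> f x <> 0 -> continuous (fun y => / f y) x.
Proof. intros. apply (cR_comp f (fun z => / z)); auto. apply continuous_Rinv; auto. Qed.
Lemma cR_exp (x:R) : continuous exp x.
Proof. apply continuity_pt_filterlim. apply derivable_continuous_pt. apply derivable_pt_exp. Qed.
Lemma cR_ln (x:R) : 0 < x -> continuous ln x.
Proof. intros. apply continuity_pt_filterlim. apply derivable_continuous_pt. exists (/x). apply derivable_pt_lim_ln; auto. Qed.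
Lemma cR_abs (x:R) : continuous Rabs x.
Proof. apply continuity_pt_filterlim. apply Rcontinuity_abs. Qed.
Lemma cR_pow (f : R -> R) k (x:R) : continuous f x -> continuous (fun y => f y ^ k) x.
Proof. intros H; induction k; simpl. apply cR_const. apply cR_mult; auto. Qed.
Lemma cR_sum (g : nat -> R -> R) n (x:R) : (forall k, (k <= n)%nat -> continuous (g k) x) ->
  continuous (fun y => sum_f_R0 (fun k => g k y) n) x.
Proof. induction n; intros H; simpl. apply H; lia. apply cR_plus. apply IHn; intros; apply H; lia. apply H; lia. Qed.

Definition clamp (y : R) := Rmax (- PI) (Rmin PI y).
Lemma clamp_in y : - PI <= clamp y <= PI.
Proof. unfold clamp. pose proof PI_RGT_0. unfold Rmax, Rmin; repeat destruct Rle_dec; lra. Qed.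
Lemma clamp_id y : - PI <= y <= PI -> clamp y = y.
Proof. intros. unfold clamp, Rmax, Rmin; repeat destruct Rle_dec; lra. Qed.
Lemma clamp_lip a b : Rabs (clamp a - clamp b) <= Rabs (a - b).
Proof. unfold clamp, Rmax, Rmin; pose proof PI_RGT_0; repeat destruct Rle_dec; unfold Rabs; repeat destruct Rcase_abs; lra. Qed.

Lemma fe_cont (f : R -> R)
  (hf_cont : forall phi, - PI <= phi <= PI ->
     filterlim f (within (fun y => - PI <= y <= PI) (locally phi)) (locally (f phi))) y :
  continuous (fun z => f (clamp z)) y.
Proof.
  unfold continuous.
  eapply filterlim_comp with (G := within (fun y => - PI <= y <= PI) (locally (clamp y))).
  2: apply hf_cont, clamp_in.
  intros P [eps Heps]. exists eps. intros z Hz. apply Heps.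
  2: apply clamp_in.
  unfold ball in *; simpl in *; unfold AbsRing_ball in *; simpl in *.
  unfold abs, minus, plus, opp in *; simpl in *.
  eapply Rle_lt_trans. apply clamp_lip. auto.
Qed.

Lemma sum_scal_l (c : R) (u : nat -> R) n : c * sum_f_R0 u n = sum_f_R0 (fun k => c * u k) n.
Proof. rewrite scal_sum. apply sum_eq; intros; ring. Qed.

Lemma prod_sums (u v : nat -> R) n :
  sum_f_R0 u n * sum_f_R0 v n = sum_f_R0 (fun k => sum_f_R0 (fun j => u k * v j) n) n.
Proof.
  rewrite (Rmult_comm (sum_f_R0 u n)), scal_sum. apply sum_eq; intros. rewrite sum_scal_l. auto.
Qed.

Lemma ex_RInt_sum (g : nat -> R -> R) a b n : (forall k, (k <= n)%nat -> ex_RInt (g k) a b) ->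
  ex_RInt (fun x => sum_f_R0 (fun k => g k x) n) a b.
Proof.
  induction n; intros H; simpl. apply H; lia.
  apply (ex_RInt_plus (fun x => sum_f_R0 (fun k => g k x) n) (g (S n))).
  apply IHn; intros; apply H; lia. apply H; lia.
Qed.

Lemma RInt_sum (g : nat -> R -> R) a b n : (forall k, (k <= n)%nat -> ex_RInt (g k) a b) ->
  RInt (fun x => sum_f_R0 (fun k => g k x) n) a b = sum_f_R0 (fun k => RInt (g k) a b) n.
Proof.
  induction n; intros H; simpl. auto.
  rewrite <- IHn by (intros; apply H; lia).
  apply (RInt_plus (fun x => sum_f_R0 (fun k => g k x) n) (g (S n))).
  apply ex_RInt_sum; intros; apply H; lia. apply H; lia.
Qed.

Lemma RInt_scal_l (c : R) (g : R -> R) a b : ex_RInt g a b -> RInt (fun x => c * g x) a b = c * RInt g a b.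
Proof. intros H. apply (RInt_scal g a b c H). Qed.
Lemma ex_RInt_scal_l (c : R) (g : R -> R) a b : ex_RInt g a b -> ex_RInt (fun x => c * g x) a b.
Proof. intros H. apply (ex_RInt_scal g a b c H). Qed.

Lemma exR_cont (g : R -> R) a b : (forall z, Rmin a b <= z <= Rmax a b -> continuous g z) -> ex_RInt g a b.
Proof. intros H. apply (ex_RInt_continuous (V:=R_CompleteNormedModule)); auto. Qed.

Definition Pc (a : nat -> R) n (p : R) := sum_f_R0 (fun k => a k * cos (INR k * p)) n.
Definition Ps (a : nat -> R) n (p : R) := sum_f_R0 (fun k => a k * sin (INR k * p)) n.
Definition Eab a b n p := Pc a n p * Pc b n p + Ps a n p * Ps b n p.
Definition Gw (w : R -> R) (z : R) := RInt (fun p => cos (z * p) * w p) (- PI) PI.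
Definition Dw w (a b : nat -> R) n :=
  sum_f_R0 (fun k => sum_f_R0 (fun j => a k * b j * Gw w (INR k - INR j)) n) n.

Lemma Eab_expand a b n p :
  Eab a b n p = sum_f_R0 (fun k => sum_f_R0 (fun j => a k * b j * cos ((INR k - INR j) * p)) n) n.
Proof.
  unfold Eab, Pc, Ps. rewrite !prod_sums, <- plus_sum. apply sum_eq; intros.
  rewrite <- plus_sum. apply sum_eq; intros.
  replace ((INR i - INR i0) * p) with (INR i * p - INR i0 * p) by ring. rewrite cos_minus. ring.
Qed.

Lemma cont_cosw (w : R -> R) (hw : forall y, continuous w y) z y : continuous (fun p => cos (z * p) * w p) y.
Proof.
  apply cR_mult; auto. apply (cR_comp (fun p => z * p) cos).
  apply cR_mult. apply cR_const. apply cR_id.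
  apply continuity_pt_filterlim. apply continuity_cos.
Qed.

Lemma rep (w : R -> R) (hw : forall y, continuous w y) a b n :
  Dw w a b n = RInt (fun p => Eab a b n p * w p) (- PI) PI.
Proof.
  assert (HE : forall z, ex_RInt (fun p => cos (z * p) * w p) (- PI) PI).
  { intros z. apply exR_cont. intros; apply cont_cosw; auto. }
  rewrite (RInt_ext _ (fun p => sum_f_R0 (fun k => sum_f_R0 (fun j =>
      a k * b j * (cos ((INR k - INR j) * p) * w p)) n) n)).
  2:{ intros. rewrite Eab_expand, Rmult_comm, sum_scal_l. apply sum_eq; intros.
      rewrite sum_scal_l. apply sum_eq; intros. ring. }
  rewrite RInt_sum. unfold Dw. apply sum_eq; intros.
  rewrite RInt_sum. apply sum_eq; intros. unfold Gw. rewrite RInt_scal_l; auto.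
  intros. apply ex_RInt_scal_l; auto.
  intros. apply ex_RInt_sum. intros. apply ex_RInt_scal_l; auto.
Qed.

Lemma sin_int_pi k j : sin ((INR k - INR j) * PI) = 0.
Proof. apply sin_eq_0_1. exists (Z.of_nat k - Z.of_nat j)%Z. rewrite minus_IZR, <- !INR_IZR_INZ. auto. Qed.

Lemma G1_val k j : Gw (fun _ => 1) (INR k - INR j) = if Nat.eqb k j then 2 * PI else 0.
Proof.
  unfold Gw. destruct (Nat.eqb_spec k j).
  - subst. rewrite (RInt_ext _ (fun _ => 1)). rewrite RInt_const. unfold scal; simpl; unfold mult; simpl. ring.
    intros. replace (INR j - INR j) with 0 by ring. rewrite Rmult_0_l, cos_0. apply Rmult_1_r.
  - assert (Hz : INR k - INR j <> 0). { intro H. apply n. apply INR_eq. lra. }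
    set (z := INR k - INR j) in *.
    apply is_RInt_unique.
    replace 0 with (minus (sin (z * PI) / z) (sin (z * - PI) / z)).
    apply (is_RInt_derive (fun p => sin (z * p) / z)).
    + intros. auto_derive; auto. field; auto.
    + intros. apply cont_cosw. intros; apply cR_const.
    + unfold z. replace ((INR k - INR j) * - PI) with (- ((INR k - INR j) * PI)) by ring.
      rewrite sin_neg, sin_int_pi. unfold minus, plus, opp; simpl. field; auto.
Qed.

Lemma sum_zero_fun (u : nat -> R) n : (forall i, (i <= n)%nat -> u i = 0) -> sum_f_R0 u n = 0.
Proof. induction n; intros H; simpl. apply H; lia. rewrite IHn, H; intros; try lra; try lia. apply H; lia. Qed.

Lemma sum_delta k n (c : R) : (k <= n)%nat -> sum_f_R0 (fun j => if Nat.eqb k j then c else 0) n = c.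
Proof.
  induction n; intros H; simpl.
  - assert (k = 0%nat) by lia. subst. reflexivity.
  - destruct (Nat.eq_dec k (S n)).
    + subst. rewrite Nat.eqb_refl. rewrite sum_zero_fun. ring.
      intros. destruct (Nat.eqb_spec (S n) i); [lia|auto].
    + rewrite IHn by lia. destruct (Nat.eqb_spec k (S n)); [lia|ring].
Qed.

Lemma D1_val a b n : Dw (fun _ => 1) a b n = 2 * PI * sum_f_R0 (fun k => a k * b k) n.
Proof.
  unfold Dw. rewrite sum_scal_l. apply sum_eq; intros k Hk.
  rewrite (sum_eq _ (fun j => if Nat.eqb k j then a k * b k * (2 * PI) else 0)).
  rewrite sum_delta; auto. ring.
  intros j Hj. rewrite G1_val. destruct (Nat.eqb_spec k j). subst; auto. ring.
Qed.

Lemma Eaa_nonneg a n p : 0 <= Eab a a n p.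
Proof. unfold Eab. nra. Qed.

Lemma cont_Eab a b n y : continuous (Eab a b n) y.
Proof.
  unfold Eab, Pc, Ps. apply cR_plus; apply cR_mult; apply cR_sum; intros; apply cR_mult; try apply cR_const;
  apply (cR_comp (fun p => INR k * p)); try (apply cR_mult; [apply cR_const | apply cR_id]);
  apply continuity_pt_filterlim; try apply continuity_cos; apply continuity_sin.
Qed.

Lemma Dw_lower (w : R -> R) (hw : forall y, continuous w y) (m : R) (hm : forall y, m <= w y) a n :
  m * (2 * PI * sum_f_R0 (fun k => a k * a k) n) <= Dw w a a n.
Proof.
  rewrite <- D1_val, !rep; auto. 2: intros; apply cR_const.
  rewrite <- RInt_scal_l. apply RInt_le. pose proof PI_RGT_0; lra.
  apply ex_RInt_scal_l. apply exR_cont; intros. apply cR_mult. apply cont_Eab. apply cR_const.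
  apply exR_cont; intros. apply cR_mult. apply cont_Eab. auto.
  intros. pose proof (Eaa_nonneg a n x). pose proof (hm x). nra.
  apply exR_cont; intros. apply cR_mult. apply cont_Eab. apply cR_const.
Qed.

Lemma Dw_upper (w : R -> R) (hw : forall y, continuous w y) (M : R) (hm : forall y, w y <= M) a n :
  Dw w a a n <= M * (2 * PI * sum_f_R0 (fun k => a k * a k) n).
Proof.
  rewrite <- D1_val, !rep; auto. 2: intros; apply cR_const.
  rewrite <- RInt_scal_l. apply RInt_le. pose proof PI_RGT_0; lra.
  apply exR_cont; intros. apply cR_mult. apply cont_Eab. auto.
  apply ex_RInt_scal_l. apply exR_cont; intros. apply cR_mult. apply cont_Eab. apply cR_const.
  intros. pose proof (Eaa_nonneg a n x). pose proof (hm x). nra.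
  apply exR_cont; intros. apply cR_mult. apply cont_Eab. apply cR_const.
Qed.

Lemma Dw_sym (w : R -> R) (hw : forall y, continuous w y) a b n : Dw w a b n = Dw w b a n.
Proof. rewrite !rep; auto. apply RInt_ext; intros. unfold Eab. req; ring. Qed.

Lemma Dw_quad (w : R -> R) (hw : forall y, continuous w y) a b n t :
  Dw w (fun k => t * a k + b k) (fun k => t * a k + b k) n =
  t ^ 2 * Dw w a a n + 2 * t * Dw w a b n + Dw w b b n.
Proof.
  replace (2 * t * Dw w a b n) with (t * Dw w a b n + t * Dw w b a n).
  2:{ rewrite (Dw_sym w hw b a). ring. }
  unfold Dw. rewrite !sum_scal_l, <- !plus_sum. apply sum_eq; intros.
  rewrite !sum_scal_l, <- !plus_sum. apply sum_eq; intros. ring.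
Qed.

Lemma sum_ge_first2 (u : nat -> R) n : (forall i, 0 <= u i) -> (1 <= n)%nat -> u 0%nat + u 1%nat <= sum_f_R0 u n.
Proof.
  intros H Hn. induction n. lia. destruct n. simpl. lra.
  simpl in *. assert (1 <= S n)%nat by lia. specialize (IHn H0). pose proof (H (S (S n))). lra.
Qed.

Lemma sum_ge_first (u : nat -> R) n : (forall i, 0 <= u i) -> u 0%nat <= sum_f_R0 u n.
Proof.
  intros H. induction n. simpl. lra. simpl. pose proof (H (S n)). lra.
Qed.

Definition ax (x : R) (k : nat) := x ^ k.
Definition bx (x : R) (k : nat) := INR k * x ^ (k - 1).

Lemma key_pos (w : R -> R) (hw : forall y, continuous w y) (m : R) (hm0 : 0 < m) (hm : forall y, m <= w y) x n :
  (1 <= n)%nat ->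
  0 < Dw w (ax x) (ax x) n /\
  Dw w (bx x) (ax x) n ^ 2 < Dw w (ax x) (ax x) n * Dw w (bx x) (bx x) n.
Proof.
  intros Hn. pose proof PI_RGT_0.
  assert (HA : 0 < Dw w (ax x) (ax x) n).
  { eapply Rlt_le_trans. 2: apply Dw_lower; eauto.
    assert (1 <= sum_f_R0 (fun k => ax x k * ax x k) n).
    { eapply Rle_trans. 2: apply sum_ge_first. unfold ax; simpl; lra. intros; unfold ax; nra. }
    apply Rmult_lt_0_compat; auto. apply Rmult_lt_0_compat; lra. }
  split; auto.
  set (A := Dw w (ax x) (ax x) n) in *. set (B := Dw w (bx x) (ax x) n). set (C := Dw w (bx x) (bx x) n).
  set (t := - B / A).
  pose proof (Dw_lower w hw m hm (fun k => t * ax x k + bx x k) n) as H1.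
  rewrite Dw_quad in H1; auto. rewrite (Dw_sym w hw (ax x) (bx x)) in H1. fold A B C in H1.
  assert (H2 : t ^ 2 + (t * x + 1) ^ 2 <= sum_f_R0 (fun k => (t * ax x k + bx x k) * (t * ax x k + bx x k)) n).
  { eapply Rle_trans. 2: apply sum_ge_first2; auto. unfold ax, bx; simpl. right; ring. intros; apply Rle_0_sqr. }
  assert (H3 : 0 < t ^ 2 + (t * x + 1) ^ 2).
  { destruct (Req_dec t 0). rewrite H0. simpl. lra. assert (0 < t^2) by (apply pow2_gt_0; auto). pose proof (pow2_ge_0 (t*x+1)). lra. }
  assert (H4 : 0 < t ^ 2 * A + 2 * t * B + C).
  { eapply Rlt_le_trans. 2: apply H1. apply Rmult_lt_0_compat; auto. nra. }
  unfold t in H4.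
  replace ((- B / A) ^ 2 * A + 2 * (- B / A) * B + C) with ((A * C - B ^ 2) / A) in H4 by (field; lra).
  apply Rmult_lt_compat_r with (r := A) in H4; auto. unfold Rdiv in H4. rewrite Rmult_assoc, Rinv_l in H4; lra.
Qed.

Section S.
Variables (Gam : Z -> R) (w : R -> R).
Hypothesis hG : forall k j : nat, Gam (Z.of_nat k - Z.of_nat j)%Z = Gw w (INR k - INR j).

Lemma A_eq n x : Apoly Gam n x = Dw w (ax x) (ax x) n.
Proof. unfold Apoly, Dw, ax. apply sum_eq; intros; apply sum_eq; intros. rewrite hG, pow_add. ring. Qed.

Lemma B_eq n x : Bpoly Gam n x = Dw w (bx x) (ax x) n.
Proof.
  unfold Bpoly, Dw, ax, bx. apply sum_eq; intros k _; apply sum_eq; intros j _. rewrite hG.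
  destruct k. simpl. ring. replace (S k + j - 1)%nat with (S k - 1 + j)%nat by lia. rewrite pow_add. ring.
Qed.

Lemma C_eq n x : Cpoly Gam n x = Dw w (bx x) (bx x) n.
Proof.
  unfold Cpoly, Dw, bx. apply sum_eq; intros k _; apply sum_eq; intros j _. rewrite hG.
  destruct k. simpl. ring. destruct j. simpl. ring.
  replace (S k + S j - 2)%nat with (S k - 1 + (S j - 1))%nat by lia. rewrite pow_add. ring.
Qed.
End S.

Lemma hG_of (Gam : Z -> R) (f : R -> R)
  (hGam_re : forall k : Z, Gam k = RInt (fun phi => cos (IZR k * phi) * f phi) (- PI) PI) :
  forall k j : nat, Gam (Z.of_nat k - Z.of_nat j)%Z = Gw (fun z => f (clamp z)) (INR k - INR j).
Proof.
  intros. rewrite hGam_re. unfold Gw. rewrite minus_IZR, <- !INR_IZR_INZ. apply RInt_ext.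
  intros. rewrite clamp_id; auto. pose proof PI_RGT_0. rewrite Rmin_left, Rmax_right in H; lra.
Qed.

Lemma pow_le_1 (y : R) k : 0 <= y <= 1 -> y ^ k <= 1.
Proof. intros. rewrite <- (pow1 k). apply pow_incr. lra. Qed.

Definition Wsum (h : nat -> R) (y : R) n := sum_f_R0 (fun k => h k * y ^ k) n.
Definition dh (h : nat -> R) (k : nat) := match k with O => h O | S k' => h (S k') - h k' end.

Lemma abel h y n : (1 - y) * Wsum h y n = Wsum (dh h) y n - h n * y ^ (S n).
Proof.
  unfold Wsum. induction n; simpl. ring.
  rewrite Rmult_plus_distr_l, IHn. simpl. ring.
Qed.

Lemma Wsum_le h1 h2 y n : 0 <= y -> (forall k, h1 k <= h2 k) -> Wsum h1 y n <= Wsum h2 y n.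
Proof. intros. unfold Wsum. apply sum_Rle; intros. apply Rmult_le_compat_r. apply pow_le; auto. auto. Qed.

Lemma Wsum_ge0 h y n : 0 <= y -> (forall k, 0 <= h k) -> 0 <= Wsum h y n.
Proof. intros. unfold Wsum. apply cond_pos_sum; intros. apply Rmult_le_pos; auto. apply pow_le; auto. Qed.

Definition Sg (y : R) n := sum_f_R0 (fun k => y ^ k) n.
Definition S2g (y : R) n := sum_f_R0 (fun k => INR k * INR k * y ^ (k - 1)) n.

Lemma Sg_W y n : Sg y n = Wsum (fun _ => 1) y n.
Proof. unfold Sg, Wsum. apply sum_eq; intros; ring. Qed.

Lemma geom y n : (1 - y) * Sg y n = 1 - y ^ (S n).
Proof. unfold Sg. induction n; simpl. ring. rewrite Rmult_plus_distr_l, IHn. simpl. ring. Qed.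

Lemma Sg_le y n : 0 <= y <= 1 -> Sg y n <= INR (S n).
Proof.
  intros. unfold Sg. rewrite <- (Rmult_1_l (INR (S n))), <- sum_cte. apply sum_Rle; intros.
  apply pow_le_1; lra.
Qed.

Lemma Sg_ge y n : 0 <= y <= 1 -> INR (S n) * y ^ n <= Sg y n.
Proof.
  intros. unfold Sg. rewrite Rmult_comm, <- sum_cte. apply sum_Rle; intros i Hi.
  replace n with (i + (n - i))%nat at 1 by lia. rewrite pow_add.
  pose proof (pow_le y i (proj1 H)). assert (y ^ (n - i) <= 1) by (apply pow_le_1; lra). nra.
Qed.

Section Y.
Variables (y : R) (n : nat).
Hypothesis hy : 0 <= y <= 1.
Let h := / INR (S n).
Let d := 1 - y.

Lemma hpos : 0 < h.
Proof. unfold h. apply Rinv_0_lt_compat. apply lt_0_INR; lia. Qed.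

Lemma S_up : Sg y n * (d + h) <= 2.
Proof.
  pose proof (geom y n). pose proof (Sg_le y n hy). fold d in H.
  assert (0 <= y ^ S n) by (apply pow_le; lra).
  assert (Sg y n * h <= 1).
  { unfold h. apply Rmult_le_reg_r with (r := INR (S n)). apply lt_0_INR; lia.
    rewrite Rmult_assoc, Rinv_l. lra. apply not_0_INR; lia. }
  nra.
Qed.

Lemma S_lo : 1 <= Sg y n * (d + h).
Proof.
  pose proof (geom y n). pose proof (Sg_ge y n hy). fold d in H.
  assert (y ^ S n <= y ^ n). { simpl. pose proof (pow_le y n (proj1 hy)). nra. }
  assert (y ^ n <= Sg y n * h).
  { unfold h. apply Rmult_le_reg_r with (r := INR (S n)). apply lt_0_INR; lia.
    rewrite Rmult_assoc, Rinv_l. lra. apply not_0_INR; lia. }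
  nra.
Qed.

Definition W1 := Wsum (fun k => (INR k + 1) ^ 2) y n.
Definition W2 := Wsum (fun k => 2 * INR k + 1) y n.
Definition W3 := Wsum (dh (fun k => 2 * INR k + 1)) y n.

Lemma S2_W1 : S2g y n <= W1.
Proof.
  assert (E : forall m, S2g y (S m) = Wsum (fun k => (INR k + 1) ^ 2) y m).
  { induction m. unfold S2g, Wsum; simpl. ring.
    unfold S2g, Wsum in *. rewrite tech5, IHm, (tech5 _ m). f_equal.
    replace (S (S m) - 1)%nat with (S m) by lia. rewrite !S_INR. ring. }
  unfold W1. destruct n as [|k]. unfold S2g; simpl. rewrite Rmult_0_l, Rmult_0_l. apply Wsum_ge0. lra. intros; apply pow2_ge_0.
  rewrite E. unfold Wsum. rewrite (tech5 _ k). pose proof (pow_le y (S k) (proj1 hy)).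
  assert (0 <= (INR (S k) + 1) ^ 2) by (apply pow2_ge_0). nra.
Qed.

Lemma d_nonneg : 0 <= d.
Proof. unfold d; lra. Qed.

Lemma W1_d : d * W1 <= W2.
Proof.
  unfold W1, W2, d. rewrite abel.
  assert (Wsum (dh (fun k => (INR k + 1) ^ 2)) y n = Wsum (fun k => 2 * INR k + 1) y n).
  { unfold Wsum. apply sum_eq; intros. destruct i; [simpl; ring| unfold dh; rewrite !S_INR; ring]. }
  rewrite H. assert (0 <= (INR n + 1) ^ 2 * y ^ S n). { apply Rmult_le_pos. apply pow2_ge_0. apply pow_le; lra. }
  lra.
Qed.

Lemma W2_d : d * W2 <= 2 * Sg y n.
Proof.
  unfold W2, d. rewrite abel.
  assert (Wsum (dh (fun k => 2 * INR k + 1)) y n <= Wsum (fun _ => 2) y n).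
  { apply Wsum_le. lra. intros. destruct k; [simpl; lra| unfold dh; rewrite !S_INR; lra]. }
  assert (Wsum (fun _ => 2) y n = 2 * Sg y n). { unfold Wsum, Sg. rewrite sum_scal_l. auto. }
  assert (0 <= (2 * INR n + 1) * y ^ S n). { apply Rmult_le_pos. pose proof (pos_INR n). lra. apply pow_le; lra. }
  lra.
Qed.

Lemma S2_le_n : S2g y n <= INR (S n) ^ 3.
Proof.
  unfold S2g. replace (INR (S n) ^ 3) with (INR (S n) ^ 2 * INR (S n)) by ring.
  rewrite <- sum_cte. apply sum_Rle; intros i Hi.
  assert (y ^ (i - 1) <= 1) by (apply pow_le_1; lra). assert (0 <= y ^ (i - 1)) by (apply pow_le; lra).
  assert (INR i <= INR (S n)) by (apply le_INR; lia). pose proof (pos_INR i).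
  assert (INR i * INR i <= INR (S n) ^ 2) by nra. nra.
Qed.

Lemma S2_up : S2g y n * (d + h) ^ 3 <= 16.
Proof.
  pose proof d_nonneg. pose proof hpos.
  assert (HS2 : 0 <= S2g y n). { unfold S2g. apply cond_pos_sum. intros. pose proof (pos_INR n0). assert (0 <= y^(n0-1)) by (apply pow_le; lra). apply Rmult_le_pos; nra. }
  assert (H1 : d ^ 3 * S2g y n <= 2).
  { pose proof S2_W1 as Q1. pose proof W1_d as Q2. pose proof W2_d as Q3. pose proof (geom y n) as Q4. fold d in Q4.
    assert (0 <= y ^ S n) by (apply pow_le; lra).
    assert (0 <= d*d*d) by (repeat apply Rmult_le_pos; lra).
    assert (d * d * d * S2g y n <= d * d * d * W1) by (apply Rmult_le_compat_l; auto).
    assert (d * d * (d * W1) <= d * d * W2) by (assert (0 <= d*d) by nra; apply Rmult_le_compat_l; auto).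
    assert (d * d * W2 <= d * (2 * Sg y n)) by (rewrite Rmult_assoc; apply Rmult_le_compat_l; auto).
    simpl. lra. }
  assert (H2 : h ^ 3 * S2g y n <= 1).
  { pose proof S2_le_n. unfold h. rewrite pow_inv.
    assert (0 < INR (S n) ^ 3) by (apply pow_lt, lt_0_INR; lia).
    replace 1 with (/ INR (S n) ^ 3 * INR (S n) ^ 3) by (field; try lra; apply not_0_INR; lia).
    apply Rmult_le_compat_l; auto. left; apply Rinv_0_lt_compat; auto. }
  assert ((d + h) ^ 3 <= 4 * (d ^ 3 + h ^ 3)).
  { assert (0 <= (d + h) * (d - h) ^ 2) by (apply Rmult_le_pos; [lra | apply pow2_ge_0]).
    assert (4*(d^3+h^3) - (d+h)^3 = 3*((d+h)*(d-h)^2)) by ring. lra. }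
  nra.
Qed.
End Y.

Lemma Rpower32 A : 0 < A -> Rpower A (3 / 2) = A * sqrt A.
Proof.
  intros. replace (3/2) with (1 + /2) by field. rewrite Rpower_plus, Rpower_1, Rpower_sqrt; auto.
Qed.

Lemma sqrt_le_T C T : 0 <= T -> C <= T * T -> sqrt C <= T.
Proof. intros. rewrite <- (sqrt_square T); auto. apply sqrt_le_1_alt; auto. Qed.

Lemma exp_neg_le s : 0 <= s -> exp (- s) <= / (1 + s).
Proof.
  intros. pose proof (exp_ineq1_le s). rewrite exp_Ropp. apply Rinv_le_contravar; lra.
Qed.

Lemma exp_le' x y : x <= y -> exp x <= exp y.
Proof. intros [H|H]. left; apply exp_increasing; auto. subst; lra. Qed.

Lemma chain (A B C S S2 D m M P K ev : R) :
  0 < m -> 0 < M -> 0 < P -> 0 < A -> B ^ 2 <= A * C ->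
  P * m * S <= A -> A <= P * M * S -> C <= P * M * S2 ->
  0 < D -> 1 <= S * D -> S * D <= 2 -> S2 * D ^ 3 <= 16 -> Rabs ev <= 3 ->
  Rabs (/ PI * (sqrt 2 * Rabs (B * K) / Rpower A (3 / 2)) * exp (- (K ^ 2) / (2 * A)) * ev)
  <= (3 * sqrt 2 / PI * (4 * sqrt (P * M) / (P * m))) *
     (Rabs K / (sqrt D * (1 + / (4 * P * M) * K ^ 2 * D))).
Proof.
  intros hm hM hP hA hB hA1 hA2 hC hD hS1 hS2 hS3 hev.
  pose proof PI_RGT_0 as hpi.
  rewrite Rpower32; auto.
  set (sA := sqrt A). set (sD := sqrt D).
  assert (hsA : 0 < sA) by (apply sqrt_lt_R0; auto).
  assert (hsD : 0 < sD) by (apply sqrt_lt_R0; auto).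
  assert (hsA2 : sA * sA = A) by (apply sqrt_sqrt; lra).
  assert (hsD2 : sD * sD = D) by (apply sqrt_sqrt; lra).
  assert (hS : 0 < S) by nra.
  assert (hC0 : 0 <= C) by nra.
  assert (hBb : Rabs B <= sA * sqrt C).
  { unfold sA. rewrite <- sqrt_mult_alt by lra. rewrite <- sqrt_Rsqr_abs. apply sqrt_le_1_alt.
    unfold Rsqr. simpl in hB. lra. }
  assert (hsC : sqrt C <= 4 * sqrt (P * M) / (D * sD)).
  { apply sqrt_le_T. apply Rmult_le_pos. apply Rmult_le_pos; try lra. apply sqrt_pos.
    left; apply Rinv_0_lt_compat; nra.
    assert (hPM : sqrt (P * M) * sqrt (P * M) = P * M) by (apply sqrt_sqrt; nra).
    set (q := sqrt (P * M)) in *.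
    assert (E : 4 * q / (D * sD) * (4 * q / (D * sD)) = 16 * (q * q) / (D * D * (sD * sD))) by (field; split; lra).
    rewrite E, hPM, hsD2. replace (D * D * D) with (D ^ 3) by ring.
    apply Rle_trans with (P * M * S2); auto.
    apply Rmult_le_reg_r with (r := D ^ 3). apply pow_lt; auto.
    replace (16 * (P * M) / D ^ 3 * D ^ 3) with (16 * (P * M)) by (field; try apply pow_nonzero; lra).
    assert (0 < P * M) by nra. replace (P * M * S2 * D ^ 3) with ((P * M) * (S2 * D ^ 3)) by ring.
    apply Rmult_le_compat_l with (r := P * M) in hS3; lra. }
  assert (hiA : / A <= D / (P * m)).
  { apply Rle_trans with (/ (P * m * S)). apply Rinv_le_contravar; auto. nra.
    apply Rmult_le_reg_r with (r := P * m * S). nra. rewrite Rinv_l by nra.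
    replace (D / (P * m) * (P * m * S)) with (S * D) by (field; nra). lra. }
  set (a := / (4 * P * M)).
  assert (ha : 0 < a) by (apply Rinv_0_lt_compat; nra).
  assert (hiA2 : a * D <= / (2 * A)).
  { apply Rle_trans with (/ (2 * (P * M * S))).
    - replace (/ (2 * (P * M * S))) with (a * (2 / S)) by (unfold a; field; repeat split; lra).
      apply Rmult_le_compat_l. lra. apply Rmult_le_reg_r with (r := S); auto.
      replace (2 / S * S) with 2 by (field; lra). lra.
    - apply Rinv_le_contravar; lra. }
  assert (hE : exp (- (K ^ 2) / (2 * A)) <= / (1 + a * K ^ 2 * D)).
  { apply Rle_trans with (exp (- (a * K ^ 2 * D))).
    - apply exp_le'. assert (0 <= K ^ 2) by apply pow2_ge_0.
      unfold Rdiv. replace (- K ^ 2 * / (2 * A)) with (- (K ^ 2 * / (2 * A))) by ring.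
      apply Ropp_le_contravar. replace (a * K ^ 2 * D) with (K ^ 2 * (a * D)) by ring.
      apply Rmult_le_compat_l; auto.
    - apply exp_neg_le. assert (0 <= K ^ 2) by apply pow2_ge_0. assert (0 <= a * K^2) by nra. nra. }
  assert (hE0 : 0 < exp (- (K ^ 2) / (2 * A))) by apply exp_pos.
  set (q := sqrt (P * M)) in *.
  assert (hq : 0 <= q) by apply sqrt_pos.
  assert (hX : Rabs B / sA * / A <= 4 * q / (sD * P * m)).
  { apply Rle_trans with (4 * q / (D * sD) * (D / (P * m))).
    2:{ right. field. repeat split; lra. }
    apply Rmult_le_compat. apply Rmult_le_pos. apply Rabs_pos. left; apply Rinv_0_lt_compat; auto.
    left; apply Rinv_0_lt_compat; auto.
    apply Rle_trans with (sqrt C); auto. apply Rmult_le_reg_r with (r := sA); auto.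
    unfold Rdiv. rewrite Rmult_assoc, Rinv_l by lra. lra. auto. }
  assert (hs2 : 0 < sqrt 2) by (apply sqrt_lt_R0; lra).
  assert (Habs : Rabs (/ PI * (sqrt 2 * Rabs (B * K) / (A * sA)) * exp (- (K ^ 2) / (2 * A)) * ev) =
     (/ PI * sqrt 2 * Rabs K) * (Rabs B / sA * / A) * exp (- (K ^ 2) / (2 * A)) * Rabs ev).
  { unfold Rdiv at 1. rewrite !Rabs_mult, !Rabs_Rabsolu.
    rewrite (Rabs_right (/ PI)) by (left; apply Rinv_0_lt_compat; auto).
    rewrite (Rabs_right (exp _)) by lra. rewrite (Rabs_right (sqrt 2)) by lra.
    rewrite (Rabs_right (/ (A * sA))) by (left; apply Rinv_0_lt_compat; nra).
    field. split; lra. }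
  rewrite Habs.
  assert (hpk : 0 <= / PI * sqrt 2 * Rabs K).
  { apply Rmult_le_pos. apply Rmult_le_pos. left; apply Rinv_0_lt_compat; auto. lra. apply Rabs_pos. }
  assert (hX0 : 0 <= Rabs B / sA * / A).
  { apply Rmult_le_pos. apply Rmult_le_pos. apply Rabs_pos. left; apply Rinv_0_lt_compat; auto. left; apply Rinv_0_lt_compat; auto. }
  apply Rle_trans with ((/ PI * sqrt 2 * Rabs K) * (4 * q / (sD * P * m)) * / (1 + a * K ^ 2 * D) * 3).
  - apply Rmult_le_compat; try apply Rabs_pos.
    + apply Rmult_le_pos; [apply Rmult_le_pos; auto | lra].
    + apply Rmult_le_compat; try lra.
      * apply Rmult_le_pos; auto.
      * apply Rmult_le_compat_l; auto.
      * unfold Rdiv in hE. auto.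
    + auto.
  - right. field. repeat split; try lra. assert (0 <= a * K^2 * D). { assert (0 <= K^2) by apply pow2_ge_0. assert (0 <= a*K^2) by nra. nra. } lra.
Qed.

Lemma exR_cont' (g : R -> R) a b : (forall z, continuous g z) -> ex_RInt g a b.
Proof. intros. apply exR_cont; auto. Qed.

Lemma cont_g z : continuous (fun t => exp (- t ^ 2)) z.
Proof. apply (cR_comp (fun t => - t ^ 2) exp). apply cR_opp, cR_pow, cR_id. apply cR_exp. Qed.

Lemma erf_cont u : continuous erf u.
Proof.
  unfold erf. apply cR_mult. apply cR_const.
  apply (continuous_RInt_1 (fun t => exp (- t ^ 2)) 0 u (fun z => RInt (fun t => exp (- t ^ 2)) 0 z)).
  apply filter_forall. intros z. apply (RInt_correct (V := R_CompleteNormedModule)).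
  apply exR_cont'. apply cont_g.
Qed.

Lemma erf_bound u : 0 <= u -> Rabs (erf u) <= 3.
Proof.
  intros Hu. pose proof PI_RGT_0.
  assert (H1 : 0 <= RInt (fun t => exp (- t ^ 2)) 0 u).
  { apply RInt_ge_0; auto. apply exR_cont'. apply cont_g. intros; left; apply exp_pos. }
  assert (H2 : RInt (fun t => exp (- t ^ 2)) 0 u <= RInt (fun t => exp (1 - 2 * t)) 0 u).
  { apply RInt_le; auto. apply exR_cont'. apply cont_g.
    apply exR_cont'. intros. apply (cR_comp (fun t => 1 - 2 * t) exp). apply cR_plus. apply cR_const.
    apply cR_opp. apply cR_mult. apply cR_const. apply cR_id. apply cR_exp.
    intros. apply exp_le'. assert (0 <= (x - 1) ^ 2) by apply pow2_ge_0. nra. }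
  assert (H3 : RInt (fun t => exp (1 - 2 * t)) 0 u = - exp (1 - 2 * u) / 2 - - exp (1 - 2 * 0) / 2).
  { apply is_RInt_unique. apply (is_RInt_derive (fun t => - exp (1 - 2 * t) / 2)).
    intros. auto_derive. auto. replace (1 + - (2 * x)) with (1 - 2 * x) by ring. field.
    intros. apply (cR_comp (fun t => 1 - 2 * t) exp). apply cR_plus. apply cR_const.
    apply cR_opp. apply cR_mult. apply cR_const. apply cR_id. apply cR_exp. }
  assert (H4 : exp (1 - 2 * 0) <= 3). { replace (1 - 2 * 0) with 1 by ring. apply exp_le_3. }
  pose proof (exp_pos (1 - 2 * u)).
  assert (H5 : 1 <= sqrt PI). { rewrite <- sqrt_1. apply sqrt_le_1_alt. pose proof PI_4; pose proof PI2_1. lra. }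
  unfold erf. rewrite Rabs_mult. rewrite (Rabs_right (RInt _ 0 u)) by lra.
  rewrite Rabs_right. 2: { left. apply Rmult_lt_0_compat. lra. apply Rinv_0_lt_compat. lra. }
  apply Rle_trans with (2 * (3 / 2)). 2: lra.
  apply Rmult_le_compat; try lra. left; apply Rmult_lt_0_compat. lra. apply Rinv_0_lt_compat. lra.
  unfold Rdiv. rewrite <- (Rmult_1_r 2) at 2. apply Rmult_le_compat_l. lra.
  rewrite <- Rinv_1. apply Rinv_le_contravar; lra.
Qed.

Lemma contA Gam n x : continuous (Apoly Gam n) x.
Proof.
  unfold Apoly. apply (cR_sum (fun k y => sum_f_R0 (fun j => Gam (Z.of_nat k - Z.of_nat j)%Z * y ^ (k + j)) n)).
  intros. apply (cR_sum (fun j y => Gam (Z.of_nat k - Z.of_nat j)%Z * y ^ (k + j))).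
  intros. apply cR_mult. apply cR_const. apply cR_pow, cR_id.
Qed.
Lemma contB Gam n x : continuous (Bpoly Gam n) x.
Proof.
  unfold Bpoly. apply (cR_sum (fun k y => sum_f_R0 (fun j => Gam (Z.of_nat k - Z.of_nat j)%Z * INR k * y ^ (k + j - 1)) n)).
  intros. apply (cR_sum (fun j y => Gam (Z.of_nat k - Z.of_nat j)%Z * INR k * y ^ (k + j - 1))).
  intros. apply cR_mult. apply cR_const. apply cR_pow, cR_id.
Qed.
Lemma contC Gam n x : continuous (Cpoly Gam n) x.
Proof.
  unfold Cpoly. apply (cR_sum (fun k y => sum_f_R0 (fun j => Gam (Z.of_nat k - Z.of_nat j)%Z * (INR k * INR j) * y ^ (k + j - 2)) n)).
  intros. apply (cR_sum (fun j y => Gam (Z.of_nat k - Z.of_nat j)%Z * (INR k * INR j) * y ^ (k + j - 2))).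
  intros. apply cR_mult. apply cR_const. apply cR_pow, cR_id.
Qed.

Lemma contF2 Gam K n x : 0 < Apoly Gam n x ->
  Bpoly Gam n x ^ 2 < Apoly Gam n x * Cpoly Gam n x ->
  continuous (F2 Gam K n) x.
Proof.
  intros HA HD. pose proof (contA Gam n x) as cA. pose proof (contB Gam n x) as cB. pose proof (contC Gam n x) as cC.
  set (A := Apoly Gam n) in *. set (B := Bpoly Gam n) in *. set (C := Cpoly Gam n) in *.
  assert (F2 Gam K n = fun x => / PI * (sqrt 2 * Rabs (B x * K) * / Rpower (A x) (3 / 2))
       * exp (- (K ^ 2) * / (2 * A x))
       * erf (Rabs (B x * K) * / sqrt (2 * A x * (A x * C x - B x ^ 2)))) as ->.
  { reflexivity. }
  assert (cBK : continuous (fun y => Rabs (B y * K)) x).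
  { apply (cR_comp (fun y => B y * K) Rabs). apply cR_mult; auto. apply cR_const. apply cR_abs. }
  apply cR_mult. apply cR_mult. apply cR_mult. apply cR_const.
  - apply cR_mult. apply cR_mult. apply cR_const. auto.
    apply cR_inv. unfold Rpower. apply (cR_comp (fun y => 3 / 2 * ln (A y)) exp).
    apply cR_mult. apply cR_const. apply (cR_comp A ln); auto. apply cR_ln; auto. apply cR_exp.
    pose proof (exp_pos (3 / 2 * ln (A x))). unfold Rpower. lra.
  - apply (cR_comp (fun y => - K ^ 2 * / (2 * A y)) exp). apply cR_mult. apply cR_const.
    apply cR_inv. apply cR_mult. apply cR_const. auto. lra. apply cR_exp.
  - apply (cR_comp (fun y => Rabs (B y * K) * / sqrt (2 * A y * (A y * C y - B y ^ 2))) erf).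
    apply cR_mult. auto. apply cR_inv.
    apply (cR_comp (fun y => 2 * A y * (A y * C y - B y ^ 2)) sqrt).
    apply cR_mult. apply cR_mult. apply cR_const. auto. apply cR_plus. apply cR_mult; auto.
    apply cR_opp. apply cR_pow; auto. apply continuous_sqrt.
    assert (0 < sqrt (2 * A x * (A x * C x - B x ^ 2))). apply sqrt_lt_R0. apply Rmult_lt_0_compat; lra. lra.
    apply erf_cont.
Qed.

Section I.
Variables (K a h : R).
Hypotheses (ha : 0 < a) (hh : 0 < h).

Definition gv (v : R) := Rabs K / (sqrt v * (1 + a * K ^ 2 * v)).
Definition G (x : R) := gv (1 - Rabs x + h).

Lemma gv_cont v : 0 < v -> continuous gv v.
Proof.
  intros. unfold gv. apply cR_mult. apply cR_const. apply cR_inv.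
  apply cR_mult. apply continuous_sqrt. apply cR_plus. apply cR_const. apply cR_mult. apply cR_const. apply cR_id.
  assert (0 < sqrt v) by (apply sqrt_lt_R0; auto). assert (0 <= K ^ 2) by apply pow2_ge_0.
  assert (0 <= a * K ^ 2 * v) by (apply Rmult_le_pos; [apply Rmult_le_pos|]; lra).
  apply Rgt_not_eq. apply Rmult_lt_0_compat; lra.
Qed.

Lemma G_cont x : - 1 <= x <= 1 -> continuous G x.
Proof.
  intros. unfold G. apply (cR_comp (fun x => 1 - Rabs x + h) gv).
  apply cR_plus. apply cR_plus. apply cR_const. apply cR_opp. apply cR_abs. apply cR_const.
  apply gv_cont. unfold Rabs; destruct Rcase_abs; lra.
Qed.

Lemma G_ex : ex_RInt G (-1) 1.
Proof. apply exR_cont. intros. apply G_cont. rewrite Rmin_left, Rmax_right in H; lra. Qed.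

Let sa := sqrt a.
Lemma sa_pos : 0 < sa. Proof. apply sqrt_lt_R0; auto. Qed.
Lemma sa2 : sa * sa = a. Proof. apply sqrt_sqrt; lra. Qed.

Lemma deriv0 x : 0 <= x <= 1 ->
  is_derive (fun x => - (2 / sa) * atan (Rabs K * sa * sqrt (1 - x + h))) x (gv (1 - x + h)).
Proof.
  intros Hx. pose proof sa_pos. pose proof sa2.
  auto_derive. lra. unfold gv.
  replace (1 + - x + h) with (1 - x + h) by ring.
  set (s := sqrt (1 - x + h)).
  assert (hs : 0 < s) by (apply sqrt_lt_R0; lra).
  assert (hs2 : s * s = 1 - x + h) by (apply sqrt_sqrt; lra).
  rewrite <- hs2. rewrite <- (pow2_abs K). rewrite <- H0.
  assert (0 <= Rabs K) by apply Rabs_pos.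
  assert (0 <= (Rabs K * sa * s) ^ 2) by apply pow2_ge_0.
  field. repeat split; try lra; nra.
Qed.

Lemma deriv1 x : -1 <= x <= 0 ->
  is_derive (fun x => (2 / sa) * atan (Rabs K * sa * sqrt (1 + x + h))) x (gv (1 + x + h)).
Proof.
  intros Hx. pose proof sa_pos. pose proof sa2.
  auto_derive. lra. unfold gv.
  set (s := sqrt (1 + x + h)).
  assert (hs : 0 < s) by (apply sqrt_lt_R0; lra).
  assert (hs2 : s * s = 1 + x + h) by (apply sqrt_sqrt; lra).
  rewrite <- hs2. rewrite <- (pow2_abs K). rewrite <- H0.
  assert (0 <= Rabs K) by apply Rabs_pos.
  assert (0 <= (Rabs K * sa * s) ^ 2) by apply pow2_ge_0.
  field. repeat split; try lra; nra.
Qed.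


Lemma int_G : RInt G (-1) 1 <= 4 * PI / sa.
Proof.
  pose proof sa_pos. pose proof PI_RGT_0.
  assert (E0 : ex_RInt G (-1) 0).
  { apply exR_cont. intros. apply G_cont. rewrite Rmin_left, Rmax_right in H1; lra. }
  assert (E1 : ex_RInt G 0 1).
  { apply exR_cont. intros. apply G_cont. rewrite Rmin_left, Rmax_right in H1; lra. }
  rewrite <- (RInt_Chasles G (-1) 0 1 E0 E1).
  assert (I1 : RInt G 0 1 = - (2 / sa) * atan (Rabs K * sa * sqrt (1 - 1 + h)) - - (2 / sa) * atan (Rabs K * sa * sqrt (1 - 0 + h))).
  { rewrite (RInt_ext G (fun x => gv (1 - x + h))).
    apply is_RInt_unique.
    apply (is_RInt_derive (fun x => - (2 / sa) * atan (Rabs K * sa * sqrt (1 - x + h))) (fun x => gv (1 - x + h))).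
    intros. apply deriv0. rewrite Rmin_left, Rmax_right in H1; lra.
    intros. apply (cR_comp (fun x => 1 - x + h) gv). apply cR_plus. apply cR_plus. apply cR_const. apply cR_opp, cR_id. apply cR_const.
    apply gv_cont. rewrite Rmin_left, Rmax_right in H1; lra.
    intros. unfold G. rewrite Rabs_right. auto. rewrite Rmin_left, Rmax_right in H1; lra. }
  assert (I0 : RInt G (-1) 0 = (2 / sa) * atan (Rabs K * sa * sqrt (1 + 0 + h)) - (2 / sa) * atan (Rabs K * sa * sqrt (1 + -1 + h))).
  { rewrite (RInt_ext G (fun x => gv (1 + x + h))).
    apply is_RInt_unique.
    apply (is_RInt_derive (fun x => (2 / sa) * atan (Rabs K * sa * sqrt (1 + x + h))) (fun x => gv (1 + x + h))).
    intros. apply deriv1. rewrite Rmin_left, Rmax_right in H1; lra.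
    intros. apply (cR_comp (fun x => 1 + x + h) gv). apply cR_plus. apply cR_plus. apply cR_const. apply cR_id. apply cR_const.
    apply gv_cont. rewrite Rmin_left, Rmax_right in H1; lra.
    intros. unfold G. rewrite Rabs_left. f_equal; ring. rewrite Rmin_left, Rmax_right in H1; lra. }
  change (plus (RInt G (-1) 0) (RInt G 0 1)) with (RInt G (-1) 0 + RInt G 0 1).
  rewrite I0, I1.
  pose proof (atan_bound (Rabs K * sa * sqrt (1 - 1 + h))).
  pose proof (atan_bound (Rabs K * sa * sqrt (1 - 0 + h))).
  pose proof (atan_bound (Rabs K * sa * sqrt (1 + 0 + h))).
  pose proof (atan_bound (Rabs K * sa * sqrt (1 + -1 + h))).
  assert (0 < 2 / sa) by (apply Rdiv_lt_0_compat; lra).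
  replace (4 * PI / sa) with (2 / sa * (2 * PI)) by (field; lra).
  set (t1 := atan (Rabs K * sa * sqrt (1 - 1 + h))) in *.
  set (t2 := atan (Rabs K * sa * sqrt (1 - 0 + h))) in *.
  set (t3 := atan (Rabs K * sa * sqrt (1 + 0 + h))) in *.
  set (t4 := atan (Rabs K * sa * sqrt (1 + -1 + h))) in *.
  set (c := 2 / sa) in *.
  assert (c * (t3 - t4 + (t2 - t1)) <= c * (2 * PI)) by (apply Rmult_le_compat_l; lra).
  lra.
Qed.

End I.

Lemma sumax x n : sum_f_R0 (fun k => ax x k * ax x k) n = Sg (x * x) n.
Proof. unfold Sg, ax. apply sum_eq; intros. rewrite Rpow_mult_distr. ring. Qed.
Lemma sumbx x n : sum_f_R0 (fun k => bx x k * bx x k) n = S2g (x * x) n.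
Proof. unfold S2g, bx. apply sum_eq; intros. rewrite Rpow_mult_distr. ring. Qed.

Lemma Rinv_sqrt_nonneg z : 0 <= / sqrt z.
Proof. destruct (sqrt_pos z) as [H|H]. left; apply Rinv_0_lt_compat; auto. rewrite <- H, Rinv_0. lra. Qed.

Theorem lemma2p1 (Gam : Z -> R) (f : R -> R) (K : nat -> R)
  (hf_cont : forall phi, - PI <= phi <= PI ->
     filterlim f (within (fun y => - PI <= y <= PI) (locally phi)) (locally (f phi)))
  (hf_pos : forall phi, - PI <= phi <= PI -> 0 < f phi)
  (hGam_re : forall k : Z, Gam k = RInt (fun phi => cos (IZR k * phi) * f phi) (- PI) PI)
  (hGam_im : forall k : Z, RInt (fun phi => sin (IZR k * phi) * f phi) (- PI) PI = 0)
  (hGam0 : Gam 0%Z = 1)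
  (hK : forall eps, 0 < eps -> exists N : nat, forall n : nat, (N <= n)%nat ->
          Rabs (K n) <= eps * sqrt (INR n / ln (ln (INR n)))) :
  forall eps, 0 < eps -> exists N : nat, forall n : nat, (N <= n)%nat ->
    Rabs (RInt (F2 Gam (K n) n) (-1) 1) <= eps * ln (ln (INR n)).
Proof.
  intros eps heps.
  pose proof PI_RGT_0 as hpi.
  set (fe := fun z => f (clamp z)).
  assert (hfe : forall y, continuous fe y) by (apply fe_cont; auto).
  assert (hfe_pt : forall c, - PI <= c <= PI -> continuity_pt fe c).
  { intros. apply continuity_pt_filterlim. apply hfe. }
  destruct (continuity_ab_min fe (- PI) PI ltac:(lra) hfe_pt) as [mx [Hmin Hmx]].
  destruct (continuity_ab_maj fe (- PI) PI ltac:(lra) hfe_pt) as [Mx [Hmax HMx]].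
  set (m := fe mx). set (M := fe Mx).
  assert (hfe_cl : forall y, fe y = fe (clamp y)).
  { intros. unfold fe. rewrite (clamp_id (clamp y)); auto. apply clamp_in. }
  assert (hm0 : 0 < m). { unfold m, fe. apply hf_pos, clamp_in. }
  assert (hm : forall y, m <= fe y). { intros. rewrite hfe_cl. apply Hmin, clamp_in. }
  assert (hM : forall y, fe y <= M). { intros. rewrite hfe_cl. apply Hmax, clamp_in. }
  assert (hM0 : 0 < M). { pose proof (hm 0). pose proof (hM 0). lra. }
  assert (hG := hG_of Gam f hGam_re). fold fe in hG.
  set (P := 2 * PI).
  assert (hP : 0 < P) by (unfold P; lra).
  set (a := / (4 * P * M)).
  assert (ha : 0 < a) by (apply Rinv_0_lt_compat; nra).
  set (Kc := 3 * sqrt 2 / PI * (4 * sqrt (P * M) / (P * m))).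
  assert (hKc : 0 <= Kc).
  { unfold Kc. apply Rmult_le_pos. unfold Rdiv. apply Rmult_le_pos. apply Rmult_le_pos. lra. apply sqrt_pos.
    left; apply Rinv_0_lt_compat; auto. unfold Rdiv. apply Rmult_le_pos. apply Rmult_le_pos. lra. apply sqrt_pos.
    left; apply Rinv_0_lt_compat; nra. }
  set (Cst := Kc * (4 * PI / sqrt a)).
  assert (Hpt : forall n, (1 <= n)%nat -> forall x, -1 <= x <= 1 ->
     Rabs (F2 Gam (K n) n x) <= Kc * G (K n) a (/ INR (S n)) x).
  { intros n Hn x Hx.
    assert (hh : 0 < / INR (S n)) by (apply Rinv_0_lt_compat, lt_0_INR; lia).
    assert (hy : 0 <= x * x <= 1) by nra.
    destruct (key_pos fe hfe m hm0 hm x n Hn) as [HA HB].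
    unfold F2. cbv zeta. rewrite (A_eq Gam fe hG), (B_eq Gam fe hG), (C_eq Gam fe hG).
    set (A := Dw fe (ax x) (ax x) n) in *. set (B := Dw fe (bx x) (ax x) n) in *. set (C := Dw fe (bx x) (bx x) n) in *.
    set (D := 1 - x * x + / INR (S n)).
    assert (hD : 0 < D) by (unfold D; lra).
    eapply Rle_trans. apply (chain A B C (Sg (x * x) n) (S2g (x * x) n) D m M P (K n)); auto.
    - lra.
    - pose proof (Dw_lower fe hfe m hm (ax x) n). rewrite sumax in H. fold A in H. unfold P. lra.
    - pose proof (Dw_upper fe hfe M hM (ax x) n). rewrite sumax in H. fold A in H. unfold P. lra.
    - pose proof (Dw_upper fe hfe M hM (bx x) n). rewrite sumbx in H. fold C in H. unfold P. lra.
    - apply S_lo; auto.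
    - apply S_up; auto.
    - apply S2_up; auto.
    - apply erf_bound. apply Rmult_le_pos. apply Rabs_pos. apply Rinv_sqrt_nonneg.
    - fold a. fold Kc. apply Rmult_le_compat_l; auto. unfold G, gv.
      set (v := 1 - Rabs x + / INR (S n)).
      assert (hv : 0 < v). { unfold v. unfold Rabs; destruct Rcase_abs; lra. }
      assert (hvD : v <= D). { unfold v, D. unfold Rabs; destruct Rcase_abs; nra. }
      unfold Rdiv. apply Rmult_le_compat_l. apply Rabs_pos.
      assert (0 <= K n ^ 2) by apply pow2_ge_0.
      assert (0 <= a * K n ^ 2) by nra.
      assert (0 < sqrt v) by (apply sqrt_lt_R0; auto).
      apply Rinv_le_contravar. apply Rmult_lt_0_compat; auto. nra.
      apply Rmult_le_compat; try nra. apply sqrt_le_1_alt; auto. }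
  assert (Hint : forall n, (1 <= n)%nat -> Rabs (RInt (F2 Gam (K n) n) (-1) 1) <= Cst).
  { intros n Hn.
    assert (hh : 0 < / INR (S n)) by (apply Rinv_0_lt_compat, lt_0_INR; lia).
    assert (hc : forall z, continuous (F2 Gam (K n) n) z).
    { intros z. destruct (key_pos fe hfe m hm0 hm z n Hn) as [HA HB].
      apply contF2. rewrite (A_eq Gam fe hG); auto.
      rewrite (A_eq Gam fe hG), (B_eq Gam fe hG), (C_eq Gam fe hG); auto. }
    eapply Rle_trans. apply abs_RInt_le. lra. apply exR_cont; auto.
    eapply Rle_trans. apply (RInt_le _ (fun x => Kc * G (K n) a (/ INR (S n)) x)). lra.
    apply exR_cont. intros. apply (cR_comp (F2 Gam (K n) n) Rabs); auto. apply cR_abs.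
    apply ex_RInt_scal_l. apply G_ex; auto.
    intros. apply Hpt; auto. lra.
    rewrite RInt_scal_l. 2: apply G_ex; auto.
    unfold Cst. apply Rmult_le_compat_l; auto. apply int_G; auto. }
  destruct (INR_unbounded (exp (exp (Cst / eps)))) as [N0 HN0].
  exists (S N0). intros n Hn.
  assert (Hn1 : (1 <= n)%nat) by lia.
  eapply Rle_trans. apply Hint; auto.
  assert (HnN : INR N0 <= INR n) by (apply le_INR; lia).
  assert (L1 : exp (Cst / eps) < ln (INR n)).
  { rewrite <- (ln_exp (exp (Cst / eps))) at 1. apply ln_increasing. apply exp_pos. lra. }
  assert (L2 : Cst / eps < ln (ln (INR n))).
  { rewrite <- (ln_exp (Cst / eps)) at 1. apply ln_increasing. apply exp_pos. auto. }
  apply Rmult_lt_compat_l with (r := eps) in L2; auto.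
  replace (eps * (Cst / eps)) with Cst in L2 by (field; lra). lra.
Qed.
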